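(* Let $B$ be a norming region and $x\in S$. Let $(X_n)_{n\ge0}$ be a Markov chain with law $P_h^x$, regarded as the quasi-path $[w]$ with $w_n=X_n$ for $n\ge0$ and $w_n=\partial$ for $n<0$. Then the random coloured tree obtained by applying the $B$-biased decoration kernel $\bar\Gamma^{\mathrm{deco}}$ to it has law $\bar{\mathbb P}^{(x,\mathrm{blue})}_B$. In particular, $P_h^x$-almost every path enters $B$.
   Context: $S$ countable, $p=(p_{x,y})$ stochastic on $S$, $(d_x)_{x\in S}$ offspring distributions on $\mathbb N_0$, $m_x=\sum_m m\,d_x(m)$, $q_{x,y}=m_xp_{x,y}$, $Q=(q_{x,y})$, Green's function $g=\sum_{n\ge0}Q^n$ assumed finite entrywise. In a branching Markov chain (BMC$(d,p)$: each individual at $z$ independently has a $d_z$-distributed number of children at independent $p(z,\cdot)$-distributed locations; individuals carry independent uniform labels in $[0,1]$ and a pointer to their parent's label), $\mathcal H_B$ is the set of individuals located in $B$ with no strict ancestor located in $B$. A norming region is a finite $B\subset S$ with $\sum_{y\in B}g(x,y)>0$ for all $x$; $h(x)=\mathbb E^x[\#\mathcal H_B]\in(0,\infty)$. $P_h^x$: law of the Markov chain started at $x$ with substochastic transition matrix $p^h_{x,y}=\mathbf 1_{B^c}(x)q_{x,y}h(y)/h(x)$, sent to an absorbing cemetery $\partial\notin S$ with the missing mass. $d^{\mathrm{s.b.}}_x(n)=n\,d_x(n)/m_x$. Quasi-paths: $\bar S=S\cup\{\partial\}$; a path $w\in\bar S^{\mathbb Z}$ with $w_n\in S$ exactly for $t_\partial\le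 n<t^\partial$ ($t_\partial<t^\partial$ in $\mathbb Z\cup\{\pm\infty\}$) and $w_n\to\partial$ as $n\to-\infty$; $[w]$ its class modulo time shifts. $B$-biased decoration $\bar\Gamma^{\mathrm{deco}}([w],\cdot)$: (1) for each $k\in\mathbb Z\cap[t_\partial,t^\partial)$ create a blue individual with independent uniform label $i_k$ located at $w_k$, with predecessor $i_{k-1}$ (no predecessor if $k=t_\partial$); (2) to each such spine individual at $x\notin B$ attach independently, with probability $d^{\mathrm{s.b.}}_x(n)$, $n-1$ white children at independent $p(x,\cdot)$-locations with uniform labels, each the root of an independent white BMC$(d,p)$; (3) each spine individual at $x\in B$ is the root of an independent white BMC$(d,p)$. $B$-biased BMC: two-type BMC with types white/blue; white individuals and blue individuals in $B$ reproduce as in BMC$(d,p)$ with white children; a blue individual at $x\notin B$ has $n$ children with ordered locations $y_1,\dots,y_n$ with probability $\frac1{h(x)}d_x(n)\prod_kp_{x,y_k}\sum_kh(y_k)$, and then the $k$-th is coloured blue with probability $h(y_k)/\sum_lh(y_l)$, the others white. $\bar{\mathbb P}^{(x,\mathrm{blue})}_B$ is its law started from a single blue individual at $x$ (children receiving independent uniform labels). *)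

(* Defs.v *)
From HB Require Import structures.
From Stdlib Require Import List Permutation.
From mathcomp Require Import all_boot all_order all_algebra.
From mathcomp Require Import boolp classical_sets cardinality reals ereal esum.

Set Implicit Arguments.
Unset Strict Implicit.
Unset Printing Implicit Defensive.
Import Order.TTheory GRing.Theory Num.Theory.
Local Open Scope classical_set_scope.
Local Open Scope ring_scope.

(* Finite marked plane trees.  A mark is (location, colour); colour true =  *)
(* blue, false = white.  Children are listed in order (the order in which   *)
(* the BMC generates the ordered locations y_1,...,y_n).                    *)
Inductive mtree (S : Type) : Type := Node of (S * bool) & seq (mtree S).

HB.instance Definition _ (S : Type) := gen_eqMixin (mtree S).
HB.instance Definition _ (S : Type) := gen_choiceMixin (mtree S).

Definition mark (S : Type) (t : mtree S) : S * bool := let: Node a _ := t in a.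
Definition kids (S : Type) (t : mtree S) : seq (mtree S) := let: Node _ ts := t in ts.

(* Isomorphism of marked rooted trees = equality after forgetting the order  *)
(* of the children (equivalently: forgetting the i.i.d. uniform labels).     *)
Inductive tiso (S : Type) : mtree S -> mtree S -> Prop :=
| tiso_node (a : S * bool) (ts us us' : seq (mtree S)) :
    Permutation us' us -> Forall2 (@tiso S) ts us' ->
    tiso (Node a ts) (Node a us).

(* Probability that the depth-n truncation of a branching process, whose     *)
(* reproduction is governed by the local rule [loc] (loc a cs = probability  *)
(* that an individual with mark a has exactly the ordered list of children   *)
(* with marks cs), equals the plane tree t (root mark not included).         *)
Fixpoint tw (S : Type) (R : ringType) (loc : S * bool -> seq (S * bool) -> R)
  (n : nat) (t : mtree S) : R :=
  match n with
  | 0 => if kids t is [::] then 1 else 0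
  | n'.+1 => loc (mark t) (map (@mark S) (kids t)) *
             \prod_(u <- kids t) tw loc n' u
  end.

Fixpoint countH (S : Type) (B : set S) (t : mtree S) : nat :=
  let: Node a ts := t in
  if a.1 \in B then 1%N else sumn (map (@countH S B) ts).

Section BMC.
Variables (R : realType) (S : countType).
Variables (p : S -> S -> R) (d : S -> nat -> R) (B : set S).

Local Open Scope ereal_scope.

Definition mean (x : S) : \bar R := \esum_(n in [set: nat]) (n%:R * d x n)%:E.
Definition qm (x y : S) : \bar R := mean x * (p x y)%:E.

Fixpoint Qpow (n : nat) (x y : S) : \bar R :=
  match n with
  | 0 => (if x == y then 1 else 0)%:E
  | n'.+1 => \esum_(z in [set: S]) (qm x z * Qpow n' z y)
  end.

Definition green (x y : S) : \bar R := \esum_(n in [set: nat]) Qpow n x y.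

Definition norming_region : Prop :=
  finite_set B /\ forall x, 0 < \esum_(y in B) green x y.

Local Close Scope ereal_scope.

Definition white (cs : seq (S * bool)) : bool := all (fun c => ~~ c.2) cs.

Definition bmcw (z : S) (cs : seq (S * bool)) : R :=
  if white cs then d z (size cs) * \prod_(c <- cs) p z c.1 else 0.

Definition bmcLoc (a : S * bool) (cs : seq (S * bool)) : R := bmcw a.1 cs.

(* h(x) = E^x[#H_B]: expected number of individuals of BMC(d,p) started at x *)
(* in H_B, computed as the increasing limit (supremum) over the depth n of   *)
(* the expected number of such individuals in the depth-n truncation.        *)
Definition hB (x : S) : \bar R :=
  ereal_sup (range (fun n : nat =>
    \esum_(t in [set t : mtree S | mark t = (x, false)])
       ((tw bmcLoc n t) * (countH B t)%:R)%:E)).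

Definition hr (x : S) : R := fine (hB x).
Definition mr (x : S) : R := fine (mean x).

Definition ph (x y : S) : R :=
  if x \in B then 0 else mr x * p x y * hr y / hr x.
Definition kill (x : S) : R :=
  1 - fine (\esum_(y in [set: S]) (ph x y)%:E)%E.

Definition dsb (x : S) (n : nat) : R := n%:R * d x n / mr x.

(* Local rule of the tree obtained by decorating the P_h^x-chain: blue =    *)
(* spine.  A spine individual at z notin B gets n-1 white children with      *)
(* probability d^sb_z(n) (independent p(z,.)-locations) and, independently,  *)
(* one blue child (the next spine individual) at y with probability          *)
(* p^h_{z,y}, or none with the missing mass; the blue child is listed first. *)
Definition decoLoc (a : S * bool) (cs : seq (S * bool)) : R :=
  let: (z, blue) := a in
  if ~~ blue || (z \in B) then bmcw z cs
  else match cs with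
       | (y, true) :: ws =>
           if white ws then dsb z (size ws).+1 * \prod_(c <- ws) p z c.1 * ph z y
           else 0
       | _ =>
           if white cs then dsb z (size cs).+1 * \prod_(c <- cs) p z c.1 * kill z
           else 0
       end.

Definition bbLoc (a : S * bool) (cs : seq (S * bool)) : R :=
  let: (z, blue) := a in
  if ~~ blue || (z \in B) then bmcw z cs
  else if count (fun c => c.2) cs == 1%N then
    let sh := \sum_(c <- cs) hr c.1 in
    let hblue := \sum_(c <- cs | c.2) hr c.1 in
    (hr z)^-1 * d z (size cs) * (\prod_(c <- cs) p z c.1) * sh * (hblue / sh)
  else 0.

Local Open Scope ereal_scope.

(* Law of the isomorphism class (= labelled tree up to the labels) of the    *)
(* depth-n truncation, for a process started from one blue individual at x. *)
Definition tlaw (loc : S * bool -> seq (S * bool) -> R) (x : S) (n : nat)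
  (T : mtree S) : \bar R :=
  \esum_(t in [set t : mtree S | mark t = (x, true) /\ tiso t T]) (tw loc n t)%:E.

(* P_h^x(the chain is in B at time j and was outside B before) *)
Fixpoint hitB (j : nat) (x : S) : \bar R :=
  match j with
  | 0 => (if x \in B then 1 else 0)%:E
  | j'.+1 => if x \in B then 0
             else \esum_(y in [set: S]) ((ph x y)%:E * hitB j' y)
  end.

Definition enterB (x : S) : \bar R := \esum_(j in [set: nat]) hitB j x.

End BMC.

(* Main.v *)
Require Import Defs.
From HB Require Import structures.
From Stdlib Require Import List Permutation.
From mathcomp Require Import all_boot all_order all_algebra.
From mathcomp Require Import boolp classical_sets cardinality reals ereal esum.
From mathcomp Require Import functions fsbigop topology sequences normedtype.
Set Implicit Arguments.
Unset Strict Implicit.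
Unset Printing Implicit Defensive.
Import Order.TTheory GRing.Theory Num.Theory.
Local Open Scope classical_set_scope.
Local Open Scope ring_scope.
From mathcomp Require Import ring.

Section G.
Local Open Scope ereal_scope.
Context {R : realType}.

Lemma esum_ge1 (T : choiceType) (I : set T) (a : T -> \bar R) i :
  I i -> (forall j, I j -> 0 <= a j) -> a i <= \esum_(j in I) a j.
Proof.
move=> Ii a0; apply: esum_ge; exists [set i].
  by split; [exact: finite_set1| move=> j ->].
by rewrite fsbig_set1.
Qed.

Lemma esum_single (T : choiceType) (I : set T) (a : T -> \bar R) i :
  I i -> (forall j, I j -> j <> i -> a j = 0) -> 0 <= a i ->
  \esum_(j in I) a j = a i.
Proof.
move=> Ii a0 ai0.
have a0' : forall j, I j -> 0 <= a j.
  by move=> j Ij; case: (pselect (j = i)) => [->//|/(a0 _ Ij)->].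
rewrite (esumID [set i]) //.
rewrite (_ : I `&` [set i] = [set i]); last first.
  by apply/seteqP; split=> [j [] //| j -> ]; split.
rewrite esum_set1 // esum1 ?adde0 // => j [Ij /= nji]; exact: a0.
Qed.

Lemma esum_pos (T : choiceType) (I : set T) (a : T -> \bar R) :
  (forall j, I j -> 0 <= a j) -> 0 < \esum_(j in I) a j ->
  exists2 i, I i & 0 < a i.
Proof.
move=> a0 h; case: (pselect (exists2 i, I i & 0 < a i)) => // hn; exfalso.
move: h; rewrite esum1 ?ltxx // => j Ij.
apply/eqP; rewrite eq_le a0 // andbT leNgt; apply/negP => aj; apply: hn.
by exists j.
Qed.

Lemma esumZl_fin (T : choiceType) (I : set T) (a : T -> \bar R) (r : R) :
  (0 <= r)%R -> (forall j, I j -> 0 <= a j) ->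
  \esum_(j in I) (r%:E * a j) = r%:E * \esum_(j in I) a j.
Proof.
move=> r0 a0.
rewrite esum_mkcond [in RHS]esum_mkcond.
set b := fun j => if j \in I then a j else 0.
have b0 : forall j, 0 <= b j.
  by move=> j; rewrite /b; case: ifPn => // /[!inE] /a0.
rewrite (eq_esum (b := fun j => r%:E * b j)); last first.
  by move=> j _; rewrite /b; case: ifPn => //; rewrite mule0.
rewrite /esum -ereal_supZl //; last first.
  by apply/set0P; exists 0; exists set0; [exact: fsets_set0 | rewrite fsbig_set0].
congr ereal_sup; apply/seteqP; split => x /=.
  move=> [A hA <-]; exists (\sum_(j \in A) b j); first by exists A.
  by rewrite ge0_mule_fsumr.
move=> [y [A hA <-] <-]; exists A => //; by rewrite ge0_mule_fsumr.
Qed.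

Lemma esumZl (T : choiceType) (I : set T) (a : T -> \bar R) (c : \bar R) :
  0 <= c -> (forall j, I j -> 0 <= a j) ->
  \esum_(j in I) (c * a j) = c * \esum_(j in I) a j.
Proof.
move=> c0 a0; case: c c0 => [r||] //; first by rewrite lee_fin => r0; exact: esumZl_fin.
move=> _.
have [/eqP e0|] := eqVneq (\esum_(j in I) a j) 0.
  have az : forall j, I j -> a j = 0.
    move=> j Ij; apply/eqP; rewrite eq_le a0 // andbT.
    by rewrite -(eqP e0) esum_ge1.
  rewrite (eqP e0) mule0 esum1 // => j Ij; by rewrite az // mule0.
move=> ne0.
have : 0 < \esum_(j in I) a j by rewrite lt0e ne0 esum_ge0.
move=> /[dup] pos /(esum_pos a0) [i Ii ai].
rewrite gt0_mulye //; apply/eqP; rewrite eq_le leey /=.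
apply: (@le_trans _ _ (+oo * a i)); first by rewrite gt0_mulye.
apply: (esum_ge1 (a := fun j => +oo * a j)) => // j Ij; rewrite mule_ge0 // a0 //.
Qed.

Lemma esumZr (T : choiceType) (I : set T) (a : T -> \bar R) (c : \bar R) :
  0 <= c -> (forall j, I j -> 0 <= a j) ->
  \esum_(j in I) (a j * c) = (\esum_(j in I) a j) * c.
Proof.
move=> c0 a0; rewrite [RHS]muleC -esumZl //; apply: eq_esum => j _; exact: muleC.
Qed.

Lemma esum_part (T K : choiceType) (A : set T) (key : T -> K) (F : T -> \bar R) :
  (forall x, A x -> 0 <= F x) ->
  \esum_(x in A) F x =
  \esum_(b in [set: K]) \esum_(x in A `&` [set x | key x = b]) F x.
Proof.
move=> F0; rewrite esum_esum; last by move=> b x _ [/F0].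
rewrite (reindex_esum A _ (fun x => (key x, x))) //; split.
- by move=> x Ax; split.
- by move=> x y _ _ [].
- by move=> [b x] [_ [Ax /= <-]]; exists x.
Qed.

Lemma esum_swap (T1 T2 : choiceType) (I : set T1) (J : set T2) (a : T1 -> T2 -> \bar R) :
  (forall i j, I i -> J j -> 0 <= a i j) ->
  \esum_(i in I) \esum_(j in J) a i j = \esum_(j in J) \esum_(i in I) a i j.
Proof.
move=> a0; rewrite esum_esum // esum_esum; last by move=> j i Jj Ii; exact: a0.
rewrite (reindex_esum (I `*`` (fun=> J)) _ (fun x => (x.2, x.1))) //; split.
- by move=> [i j] [/= Ii Jj]; split.
- by move=> [i j] [i' j'] _ _ /= [-> ->].
- by move=> [j i] [/= Jj Ii]; exists (i, j).
Qed.


Lemma sup_partial (f : nat -> \bar R) : (forall n, 0 <= f n) ->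
  ereal_sup (range (fun n => \sum_(j < n.+1) f j)) = \esum_(j in [set: nat]) f j.
Proof.
move=> f0; rewrite -nneseries_esumT //.
have := ereal_nondecreasing_series (u_ := f) (P := xpredT) (N := 0%N) (fun n _ _ => f0 n).
move/ereal_nondecreasing_cvgn/cvg_lim => -> //.
apply/eqP; rewrite eq_le; apply/andP; split.
- apply: ge_ereal_sup => _ [n _ <-]; apply: ereal_sup_ubound; exists n.+1 => //.
  by rewrite big_mkord.
- apply: ge_ereal_sup => _ [n _ <-]; apply: (@le_trans _ _ (\sum_(0 <= i < n.+1) f i)).
    by rewrite lee_sum_nneg_natr // => *; exact: f0.
  by apply: ereal_sup_ubound; exists n => //; rewrite big_mkord.
Qed.

Lemma esum_shift (f : nat -> \bar R) : (forall n, 0 <= f n) -> f 0%N = 0 ->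
  \esum_(j in [set: nat]) f j = \esum_(j in [set: nat]) f j.+1.
Proof.
move=> f0 f00; rewrite (esumID [set 0%N]) //.
rewrite (_ : [set: nat] `&` [set 0%N] = [set 0%N]); last first.
  by apply/seteqP; split => [j [] //| j ->].
rewrite esum_set1 // f00 add0e.
apply: (reindex_esum _ _ succn); split.
- by move=> j _; split.
- by move=> i j _ _ [].
- by move=> [|j] [_ /= h] //; exists j.
Qed.

End G.

Section TISO.
Variable S : Type.
Notation tree := (mtree S).

Section MInd.
Variable P : tree -> Prop.
Hypothesis H : forall a ts, (forall t, In t ts -> P t) -> P (Node a ts).
Fixpoint mtree_ind2 (t : tree) : P t :=
  let go := fix go (l : seq tree) : forall u, In u l -> P u :=
       match l return forall u, In u l -> P u with
       | nil => fun u (hi : In u nil) => False_ind (P u) hi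
       | cons x l' => fun u (hi : In u (x :: l')) => match hi with
            | or_introl e => eq_ind x P (mtree_ind2 x) u e
            | or_intror h => go l' u h end
       end in
  match t with Node a ts => @H a ts (go ts) end.
End MInd.

Definition PI (ts us : seq tree) :=
  exists us', Permutation us' us /\ Forall2 (@tiso S) ts us'.

Lemma tisoE a b (ts us : seq tree) : tiso (Node a ts) (Node b us) <-> a = b /\ PI ts us.
Proof.
split.
  by move=> h; inversion h; subst; split => //; exists us'.
by move=> [<- [us' [h1 h2]]]; apply: tiso_node h1 h2.
Qed.

Lemma tiso_mark (t u : tree) : tiso t u -> mark t = mark u.
Proof. by case: t u => a ts [b us] h; case/tisoE: h => ->. Qed.

Lemma F2_refl_in (R : tree -> tree -> Prop) ts :
  (forall t, In t ts -> R t t) -> Forall2 R ts ts.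
Proof.
elim: ts => [|t ts IH] h; constructor; first by apply: h; left.
by apply: IH => u hu; apply: h; right.
Qed.

Lemma F2_sym_in (R : tree -> tree -> Prop) ts us :
  (forall t, In t ts -> forall u, R t u -> R u t) -> Forall2 R ts us -> Forall2 R us ts.
Proof.
move=> h f; elim: f h => [|t u ts' us' r f IH] h; constructor.
  by apply: h => //; left.
by apply: IH => v hv; apply: h; right.
Qed.

Lemma F2_trans_in (R : tree -> tree -> Prop) ts us vs :
  (forall t, In t ts -> forall u v, R t u -> R u v -> R t v) ->
  Forall2 R ts us -> Forall2 R us vs -> Forall2 R ts vs.
Proof.
move=> h f; elim: f vs h => [|t u ts' us' r f IH] vs h g; inversion g; subst.
  by constructor.
constructor; first by apply: (h t (or_introl erefl)) r _.
by apply: IH => // w hw; apply: h; right.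
Qed.

Lemma tiso_refl (t : tree) : tiso t t.
Proof.
elim/mtree_ind2: t => a ts IH; apply/tisoE; split => //; exists ts; split => //.
exact: F2_refl_in.
Qed.

Lemma tiso_sym (t u : tree) : tiso t u -> tiso u t.
Proof.
elim/mtree_ind2: t u => a ts IH [b us] /tisoE [<- [us' [p f]]].
apply/tisoE; split => //.
have f' : Forall2 (@tiso S) us' ts by apply: F2_sym_in f => t /IH.
have [l [p1 f1]] := Permutation_Forall2 p f'.
by exists l; split => //; apply: Permutation_sym.
Qed.

Lemma tiso_trans (t u v : tree) : tiso t u -> tiso u v -> tiso t v.
Proof.
elim/mtree_ind2: t u v => a ts IH [b us] [c vs] /tisoE [<- [us' [p f]]]
  /tisoE [<- [vs' [q g]]].
apply/tisoE; split => //.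
have [l [p1 f1]] := Permutation_Forall2 (Permutation_sym p) g.
exists l; split; first by apply: Permutation_trans (Permutation_sym p1) q.
by apply: F2_trans_in f f1 => w /IH.
Qed.

Lemma F2_tiso_trans (ts us vs : seq tree) :
  Forall2 (@tiso S) ts us -> Forall2 (@tiso S) us vs -> Forall2 (@tiso S) ts vs.
Proof. by apply: F2_trans_in => t _ u v; apply: tiso_trans. Qed.

Lemma PI_perm (ts us : seq tree) : Permutation ts us -> PI ts us.
Proof. by move=> p; exists ts; split => //; apply: F2_refl_in => t _; apply: tiso_refl. Qed.

Lemma PI_F2 (ts us : seq tree) : Forall2 (@tiso S) ts us -> PI ts us.
Proof. by move=> f; exists us; split. Qed.

Lemma PI_refl (ts : seq tree) : PI ts ts.
Proof. exact: PI_perm. Qed.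

Lemma PI_trans (ts us vs : seq tree) : PI ts us -> PI us vs -> PI ts vs.
Proof.
move=> [us' [p f]] [vs' [q g]].
have [l [p1 f1]] := Permutation_Forall2 (Permutation_sym p) g.
exists l; split; first by apply: Permutation_trans (Permutation_sym p1) q.
exact: F2_tiso_trans f f1.
Qed.

Lemma PI_sym (ts us : seq tree) : PI ts us -> PI us ts.
Proof.
move=> [us' [p f]].
have f' : Forall2 (@tiso S) us' ts by apply: F2_sym_in f => t _ u; apply: tiso_sym.
have [l [p1 f1]] := Permutation_Forall2 p f'.
by exists l; split => //; apply: Permutation_sym.
Qed.

Lemma PI_cons (x y : tree) xs ys : tiso x y -> PI xs ys -> PI (x :: xs) (y :: ys).
Proof.
move=> h [ys' [p f]]; exists (y :: ys'); split; first by constructor.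
by constructor.
Qed.

Lemma PI_cons_inv (x y : tree) xs ys : PI (x :: xs) (y :: ys) -> tiso x y -> PI xs ys.
Proof.
move=> [zs [p f]] hxy; inversion f as [|x' z xs' zs' hxz f']; subst.
have [l1 [l2 e]] := Permutation_vs_cons_inv (Permutation_sym p).
case: l1 e => [|w l1] /= [e1 e2]; subst.
  by exists zs'; split => //; apply: Permutation_cons_inv p.
have p' : Permutation zs' (w :: l1 ++ l2).
  by apply: (@Permutation_cons_app_inv _ _ (w :: l1) l2); exact: p.
apply: (@PI_trans _ (w :: l1 ++ l2)); first by exists zs'.
apply: (@PI_trans _ (z :: l1 ++ l2)).
  apply: PI_cons; last exact: PI_refl.
  by apply: tiso_trans (tiso_sym hxy) hxz.
exact/PI_perm/Permutation_middle.
Qed.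

Lemma PI_nil (ts : seq tree) : PI ts [::] <-> ts = [::].
Proof.
split; last by move=> ->; exact: PI_refl.
move=> [us' [p f]]; have := Permutation_length p; case: us' p f => // _ f _.
by inversion f.
Qed.

Lemma size_length (T : Type) (l : seq T) : size l = length l.
Proof. by elim: l => //= x l ->. Qed.

Lemma PI_size (ts us : seq tree) : PI ts us -> size ts = size us.
Proof.
move=> [us' [p f]]; rewrite !size_length (Forall2_length f).
exact: Permutation_length.
Qed.

End TISO.

Section LC.
Context {R : realType} {S : Type}.
Notation tree := (mtree S).

Definition rem_at (T : Type) b (l : seq T) := take b l ++ drop b.+1 l.

Lemma perm_rem_at (T : Type) (x0 : T) b (l : seq T) : (b < size l)%N ->
  Permutation l (nth x0 l b :: rem_at b l).
Proof.
move=> hb; rewrite /rem_at -{1}(cat_take_drop b l) (drop_nth x0 hb).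
apply: Permutation_sym; exact: Permutation_middle.
Qed.

Lemma size_rem_at (T : Type) b (l : seq T) : (b < size l)%N ->
  size (rem_at b l) = (size l).-1.
Proof.
move=> hb; rewrite /rem_at size_cat size_take hb size_drop.
by case: (size l) hb => // n; rewrite ltnS => hb; rewrite subSS subnKC.
Qed.

Definition key (u : tree) (Us : seq tree) := find (fun U => `[< tiso u U >]) Us.
Arguments key : simpl never.

Lemma canc (U0 u : tree) ts Us b : (b < size Us)%N -> tiso u (nth U0 Us b) ->
  PI (u :: ts) Us <-> PI ts (rem_at b Us).
Proof.
move=> hb hu; have p := perm_rem_at U0 hb; split.
  move=> h; apply: PI_cons_inv hu; apply: PI_trans h (PI_perm p).
move=> h; apply: PI_trans (PI_cons hu h) (PI_perm (Permutation_sym p)).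
Qed.

Lemma In_has (T : Type) (P : pred T) (w : T) l : In w l -> P w -> has P l.
Proof. by elim: l => //= x l IH [<- ->|/IH h /h ->]; rewrite ?orbT. Qed.

Lemma key_lt (u : tree) ts Us : PI (u :: ts) Us -> (key u Us < size Us)%N.
Proof.
move=> [us' [p f]]; inversion f as [|x w xs ws hw f']; subst.
rewrite /key -has_find; apply: (@In_has _ _ w).
  by apply: (Permutation_in w p); left.
exact/asboolP.
Qed.

Lemma key_tiso (U0 u : tree) Us : (key u Us < size Us)%N -> tiso u (nth U0 Us (key u Us)).
Proof.
rewrite /key -has_find => h.
exact: (@asboolW _ (nth_find U0 h)).
Qed.

Lemma key_eq (u v : tree) Us : tiso u v -> key u Us = key v Us.
Proof.
move=> h; apply: eq_find => U; apply/asboolP/asboolP => h'.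
  exact: tiso_trans (tiso_sym h) h'.
exact: tiso_trans h h'.
Qed.

Lemma LC (D D' : tree -> R) : (forall t, (0 <= D t)%R) -> (forall t, (0 <= D' t)%R) ->
  (forall U, (\esum_(u in [set u | tiso u U]) (D u)%:E =
              \esum_(u in [set u | tiso u U]) (D' u)%:E)%E) ->
  forall Us, (\esum_(ts in [set ts | PI ts Us]) (\prod_(u <- ts) D u)%:E =
              \esum_(ts in [set ts | PI ts Us]) (\prod_(u <- ts) D' u)%:E)%E.
Proof.
move=> D0 D'0 hcl Us; move: {2}(size Us) (erefl (size Us)) => n.
elim: n Us => [|n IH] Us.
  move/size0nil => ->.
  rewrite (_ : [set ts | PI ts [::]] = [set [::]]); last first.
    by apply/seteqP; split => ts /=; move/PI_nil.
  by rewrite !esum_set1 ?big_nil.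
case: Us => // U0 Us1 hs; set Us := U0 :: Us1.
have prodge0 : forall (F : tree -> R), (forall t, (0 <= F t)%R) -> forall ts,
  (0 <= \prod_(u <- ts) F u)%R by move=> F F0 ts; apply: prodr_ge0 => *.
set P := [set p : tree * seq tree | PI (p.1 :: p.2) Us].
have hbij : set_bij P [set ts | PI ts Us] (fun p => p.1 :: p.2).
  split.
  - by move=> p.
  - by move=> [u ts] [v vs] _ _ /= [-> ->].
  - move=> [|u ts] /= h; first by move/PI_size: h.
    by exists (u, ts).
rewrite !(reindex_esum P _ _ _ hbij).
rewrite !(@esum_part _ _ _ _ (fun p => key p.1 Us)); first last.
  by move=> p _; rewrite lee_fin prodge0.
  by move=> p _; rewrite lee_fin prodge0.
apply: eq_esum => b _.
have setE : P `&` [set p | key p.1 Us = b] =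
   [set u | key u Us = b /\ (b < size Us)%N] `*`` (fun=> [set ts | PI ts (rem_at b Us)]).
  apply/seteqP; split => [[u ts]|[u ts]].
    move=> [h0 hk0]; have h : PI (u :: ts) Us := h0.
    have hk : key u Us = b := hk0.
    have hl := key_lt h; rewrite hk in hl.
    have ht : tiso u (nth U0 Us b) by rewrite -hk; apply: key_tiso; rewrite hk.
    exact: (conj (conj hk hl) (proj1 (canc ts hl ht) h)).
  move=> [[hk hl] h]; apply: (conj _ hk).
  have ht : tiso u (nth U0 Us b) by rewrite -hk; apply: key_tiso; rewrite hk.
  exact: (proj2 (canc ts hl ht) h).
rewrite setE.
have inner : forall F : tree -> R, (forall t, (0 <= F t)%R) ->
   (\esum_(x in [set u | key u Us = b /\ (b < size Us)%N] `*`` (fun=> [set ts | PI ts (rem_at b Us)]))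
      (\prod_(v <- x.1 :: x.2) F v)%:E =
    (\esum_(u in [set u | key u Us = b /\ (b < size Us)%N]) (F u)%:E) *
    \esum_(ts in [set ts | PI ts (rem_at b Us)]) (\prod_(v <- ts) F v)%:E)%E.
  move=> F F0.
  rewrite -(esum_esum (a := fun u ts => (\prod_(v <- u :: ts) F v)%:E)); last first.
    by move=> *; rewrite lee_fin prodge0.
  rewrite -esumZr; first last.
  - by move=> *; rewrite lee_fin.
  - by apply: esum_ge0 => *; rewrite lee_fin prodge0.
  apply: eq_esum => u _ /=; rewrite -esumZl; first last.
  - by move=> *; rewrite lee_fin prodge0.
  - by rewrite lee_fin.
  by apply: eq_esum => ts _; rewrite big_cons EFinM.
rewrite !inner //.
case: (pselect (b < size Us)%N) => hb; last first.
  rewrite (_ : [set u | key u Us = b /\ (b < size Us)%N] = set0) ?esum_set0 ?mul0e //.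
  by apply/seteqP; split => // u [_].
have IH' := IH (rem_at b Us); rewrite size_rem_at // hs /= in IH'.
rewrite IH' //; congr (_ * _)%E.
case: (pselect (key (nth U0 Us b) Us = b)) => hk.
  rewrite (_ : [set u | key u Us = b /\ (b < size Us)%N] = [set u | tiso u (nth U0 Us b)]) //.
  apply/seteqP; split => u /=.
    move=> [hu _]; rewrite -hu; apply: key_tiso; rewrite hu //.
  by move=> h; split => //; rewrite (key_eq Us h).
rewrite (_ : [set u | key u Us = b /\ (b < size Us)%N] = set0) ?esum_set0 //.
apply/seteqP; split => // u [hu _]; apply: hk.
have hl : (key u Us < size Us)%N by rewrite hu.
by have := key_eq Us (key_tiso U0 hl); rewrite hu => <-.
Qed.

End LC.

Section H1.
Variables (R : realType) (S : countType) (p : S -> S -> R) (d : S -> nat -> R) (B : set S).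
Hypothesis p0 : forall y z, (0 <= p y z)%R.
Hypothesis psum : forall y, (\esum_(z in [set: S]) (p y z)%:E = 1)%E.
Hypothesis d0 : forall y n, (0 <= d y n)%R.
Hypothesis dsum : forall y, (\esum_(n in [set: nat]) (d y n)%:E = 1)%E.

Notation tree := (mtree S).
Notation w := (tw (bmcLoc p d)).
Local Open Scope ereal_scope.

Lemma tw_ge0 (loc : S * bool -> seq (S * bool) -> R) :
  (forall a cs, (0 <= loc a cs)%R) -> forall n t, (0 <= tw loc n t)%R.
Proof.
move=> h; elim=> [|n IH] [a ts] /=; first by case: ts.
by rewrite mulr_ge0 // prodr_ge0.
Qed.

Lemma bmcw_ge0 z cs : (0 <= bmcw p d z cs)%R.
Proof. by rewrite /bmcw; case: ifP => // _; rewrite mulr_ge0 // prodr_ge0. Qed.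

Lemma w_ge0 n t : (0 <= w n t)%R.
Proof. by apply: tw_ge0 => a cs; exact: bmcw_ge0. Qed.

Definition psi z n (u : tree) : R := if (mark u).2 then 0%R else (p z (mark u).1 * w n u)%R.

Lemma psi_ge0 z n u : (0 <= psi z n u)%R.
Proof. by rewrite /psi; case: ifP => // _; rewrite mulr_ge0 // w_ge0. Qed.

Lemma bmcw_prod z n (ts : seq tree) :
  (bmcw p d z (map (@mark S) ts) * \prod_(u <- ts) w n u =
   d z (size ts) * \prod_(u <- ts) psi z n u)%R.
Proof.
rewrite /bmcw size_map /white all_map; case: ifP => hw.
  rewrite -mulrA big_map -big_split /=; congr (_ * _)%R.
  apply: eq_big_seq => u hu; rewrite /psi.
  by move/allP: hw => /(_ u hu) /= /negbTE ->.
rewrite mul0r; apply/esym/eqP; rewrite mulf_eq0; apply/orP; right.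
rewrite prodf_seq_eq0; move/negbT: hw; rewrite -has_predC => /hasP [u hu /= hm].
apply/hasP; exists u => //; rewrite /psi; move: hm; rewrite negbK => -> //.
Qed.

Lemma esum_node (a : S * bool) (G : tree -> \bar R) :
  \esum_(t in [set t : tree | mark t = a]) G t = \esum_(ts in [set: seq tree]) G (Node a ts).
Proof.
apply: reindex_esum; split.
- by move=> ts.
- by move=> ts us _ _ [].
- by move=> [b ts] /= ->; exists ts.
Qed.

Lemma esum_by_mark (F : tree -> \bar R) : (forall u, 0 <= F u) ->
  \esum_(u in [set: tree]) F u =
  \esum_(c in [set: S * bool]) \esum_(u in [set u : tree | mark u = c]) F u.
Proof.
move=> F0; rewrite (@esum_part _ _ _ _ (@mark S)) //; apply: eq_esum => c _.
by rewrite setTI.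
Qed.

Lemma esum_false (G : S * bool -> \bar R) : (forall c, 0 <= G c) ->
  (forall y, G (y, true) = 0) ->
  \esum_(c in [set: S * bool]) G c = \esum_(y in [set: S]) G (y, false).
Proof.
move=> G0 Gt; rewrite (esumID [set c : S * bool | c.2 = false]) //.
rewrite [X in _ + X]esum1 ?adde0; last first.
  by move=> [y []] [_ /= h] //; rewrite Gt.
apply: (reindex_esum _ _ (fun y => (y, false))); split.
- by move=> y.
- by move=> y y' _ _ [].
- by move=> [y []] [_ /= h] //; exists y.
Qed.

Lemma esum_size (F : seq tree -> \bar R) : (forall u, 0 <= F u) ->
  \esum_(ts in [set: seq tree]) F ts =
  \esum_(k in [set: nat]) \esum_(ts in [set ts : seq tree | size ts = k]) F ts.
Proof.
move=> F0; rewrite (@esum_part _ _ _ _ size) //; apply: eq_esum => c _.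
by rewrite setTI.
Qed.

Lemma esum_cons k (F : seq tree -> \bar R) : (forall u, 0 <= F u) ->
  \esum_(ts in [set ts : seq tree | size ts = k.+1]) F ts =
  \esum_(u in [set: tree]) \esum_(ts in [set ts : seq tree | size ts = k]) F (u :: ts).
Proof.
move=> F0; rewrite (esum_esum (a := fun u ts => F (u :: ts))) //.
apply: reindex_esum; split.
- by move=> [u ts] [_ /= <-].
- by move=> [u ts] [v vs] _ _ /= [-> ->].
- by move=> [|u ts] //= [h]; exists (u, ts).
Qed.

Lemma PL (f : tree -> R) : (forall u, (0 <= f u)%R) ->
  \esum_(u in [set: tree]) (f u)%:E = 1 -> forall k,
  \esum_(ts in [set ts : seq tree | size ts = k]) (\prod_(u <- ts) f u)%:E = 1.
Proof.
move=> f0 f1; elim=> [|k IH].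
  rewrite (_ : [set ts : seq tree | size ts = 0%N] = [set [::]]); last first.
    by apply/seteqP; split => [[]|ts ->].
  by rewrite esum_set1 ?big_nil.
rewrite esum_cons; last by move=> u; rewrite lee_fin prodr_ge0.
rewrite -[RHS]f1; apply: eq_esum => u _.
under eq_esum do rewrite big_cons EFinM.
by rewrite esumZl ?IH ?mule1 ?lee_fin // => ts _; rewrite lee_fin prodr_ge0.
Qed.

Lemma CL (f g : tree -> R) : (forall u, (0 <= f u)%R) -> (forall u, (0 <= g u)%R) ->
  \esum_(u in [set: tree]) (f u)%:E = 1 -> forall k,
  \esum_(ts in [set ts : seq tree | size ts = k])
     (\prod_(u <- ts) f u * \sum_(u <- ts) g u)%:E =
  (k%:R)%:E * \esum_(u in [set: tree]) (f u * g u)%:E.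
Proof.
move=> f0 g0 f1; elim=> [|k IH].
  rewrite mul0e esum1 // => ts /= /size0nil ->; by rewrite !big_nil mulr0.
have pos : forall ts : seq tree, (0 <= \prod_(u <- ts) f u)%R by move=> ts; rewrite prodr_ge0.
have spos : forall ts : seq tree, (0 <= \sum_(u <- ts) g u)%R by move=> ts; rewrite sumr_ge0.
rewrite esum_cons; last by move=> ts; rewrite lee_fin mulr_ge0.
under eq_esum do under eq_esum do rewrite big_cons big_cons mulrDr EFinD.
rewrite (eq_esum (b := fun u => (f u * g u)%:E + (f u)%:E *
   \esum_(ts in [set ts : seq tree | size ts = k]) (\prod_(v <- ts) f v * \sum_(v <- ts) g v)%:E)); last first.
  move=> u _; rewrite esumD; first last.
  - by move=> ts _; rewrite lee_fin !mulr_ge0.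
  - by move=> ts _; rewrite lee_fin !mulr_ge0.
  congr (_ + _).
    rewrite (eq_esum (b := fun ts => (f u * g u)%:E * (\prod_(v <- ts) f v)%:E)); last first.
      by move=> ts _; rewrite -EFinM mulrAC.
    rewrite esumZl; first last.
    - by move=> ts _; rewrite lee_fin prodr_ge0.
    - by rewrite lee_fin mulr_ge0.
    by rewrite PL // mule1.
  rewrite (eq_esum (b := fun ts => (f u)%:E * (\prod_(v <- ts) f v * \sum_(v <- ts) g v)%:E)); last first.
    by move=> ts _; rewrite -EFinM mulrA.
  rewrite esumZl //; first by rewrite lee_fin.
  by move=> ts _; rewrite lee_fin mulr_ge0.
rewrite esumD; first last.
- by move=> u _; rewrite mule_ge0 ?lee_fin ?esum_ge0 // => ts _; rewrite lee_fin mulr_ge0.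
- by move=> u _; rewrite lee_fin mulr_ge0.
rewrite esumZr; first last.
- by move=> u _; rewrite lee_fin.
- by apply: esum_ge0 => ts _; rewrite lee_fin mulr_ge0.
rewrite f1 mul1e IH -[in RHS]addn1 natrD EFinD ge0_muleDl ?lee_fin //.
by rewrite mul1e addeC.
Qed.


Definition Mn n y := \esum_(t in [set t : tree | mark t = (y, false)]) (w n t)%:E.
Definition An n y :=
  \esum_(t in [set t : tree | mark t = (y, false)]) (w n t * (countH B t)%:R)%:E.

Lemma esum_markp z (h : tree -> R) : (forall u, (0 <= h u)%R) ->
  \esum_(u in [set: tree]) ((if (mark u).2 then 0 else p z (mark u).1 * h u)%R)%:E =
  \esum_(y in [set: S]) ((p z y)%:E *
      \esum_(u in [set u : tree | mark u = (y, false)]) (h u)%:E).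
Proof.
move=> h0; rewrite esum_by_mark; last first.
  by move=> u; rewrite lee_fin; case: ifP => // _; rewrite mulr_ge0.
rewrite esum_false; first last.
- by move=> y; rewrite esum1 // => u /= ->.
- move=> c; apply: esum_ge0 => u _; rewrite lee_fin; case: ifP => // _.
  by rewrite mulr_ge0.
apply: eq_esum => y _; rewrite -esumZl_fin //; last by move=> u _; rewrite lee_fin.
by apply: eq_esum => u /= ->.
Qed.

Lemma M_eq n y : Mn n y = 1.
Proof.
elim: n y => [|n IH] y.
  rewrite /Mn esum_node /= (@esum_single _ _ _ _ [::]) //.
  by move=> [|u ts] // _ [].
rewrite /Mn esum_node /=.
under eq_esum do rewrite /bmcLoc /= bmcw_prod.
have hpsi : \esum_(u in [set: tree]) (psi y n u)%:E = 1.
  rewrite /psi esum_markp; last exact: w_ge0.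
  rewrite -[RHS](psum y); apply: eq_esum => z _.
  by rewrite -/(Mn n z) IH mule1.
rewrite esum_size; last by move=> ts; rewrite lee_fin mulr_ge0 ?prodr_ge0 // => *; exact: psi_ge0.
rewrite -[RHS](dsum y); apply: eq_esum => k _.
rewrite (eq_esum (b := fun ts => (d y k)%:E * (\prod_(u <- ts) psi y n u)%:E)); last first.
  by move=> ts /= ->.
rewrite esumZl_fin // ?PL ?mule1 //; first exact: psi_ge0.
by move=> ts _; rewrite lee_fin prodr_ge0 // => *; exact: psi_ge0.
Qed.

Lemma A_in n y : y \in B -> An n y = 1.
Proof.
move=> hy; rewrite -(M_eq n y); apply: eq_esum => -[a ts] /= ->.
by rewrite /= hy mulr1.
Qed.

Lemma A0_out y : y \notin B -> An 0 y = 0.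
Proof.
move=> hy; apply: esum1 => -[a [|u ts]] /= -> //=; first by rewrite (negbTE hy) mulr0.
by rewrite mul0r.
Qed.

Lemma natr_sumn (f : tree -> nat) (ts : seq tree) :
  ((sumn (map f ts))%:R = \sum_(u <- ts) (f u)%:R :> R)%R.
Proof. by elim: ts => [|u ts IH] /=; rewrite ?big_nil ?big_cons // natrD IH. Qed.

Lemma A_succ n z : z \notin B ->
  An n.+1 z = mean d z * \esum_(y in [set: S]) ((p z y)%:E * An n y).
Proof.
move=> hz; rewrite /An esum_node /=.
under eq_esum do rewrite /bmcLoc /= bmcw_prod (negbTE hz) natr_sumn -mulrA.
set E := \esum_(u in [set: tree]) (psi z n u * (countH B u)%:R)%:E.
have hE : E = \esum_(y in [set: S]) ((p z y)%:E * An n y).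
  rewrite /E (eq_esum (b := fun u => ((if (mark u).2 then 0 else
        p z (mark u).1 * (w n u * (countH B u)%:R))%R)%:E)); last first.
    by move=> u _; rewrite /psi; case: ifP; rewrite ?mul0r // mulrA.
  by rewrite esum_markp // => u; rewrite mulr_ge0 ?w_ge0.
have hpsi : \esum_(u in [set: tree]) (psi z n u)%:E = 1.
  rewrite /psi esum_markp; last exact: w_ge0.
  rewrite -[RHS](psum z); apply: eq_esum => y _.
  by rewrite -/(Mn n y) M_eq mule1.
have pp : forall ts : seq tree, (0 <= \prod_(u <- ts) psi z n u)%R.
  by move=> ts; rewrite prodr_ge0 // => *; exact: psi_ge0.
have sp : forall ts : seq tree, (0 <= \sum_(u <- ts) (countH B u)%:R :> R)%R.
  by move=> ts; rewrite sumr_ge0.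
rewrite esum_size; last by move=> ts; rewrite lee_fin !mulr_ge0.
rewrite -hE /mean -esumZr; first last.
- by move=> k _; rewrite lee_fin mulr_ge0.
- by rewrite hE; apply: esum_ge0 => y _; rewrite mule_ge0 ?lee_fin ?esum_ge0 // => *;
     rewrite lee_fin mulr_ge0 ?w_ge0.
apply: eq_esum => k _.
rewrite (eq_esum (b := fun ts => (d z k)%:E *
   (\prod_(u <- ts) psi z n u * \sum_(u <- ts) (countH B u)%:R)%:E)); last first.
  by move=> ts /= ->.
rewrite esumZl_fin //; last by move=> ts _; rewrite lee_fin mulr_ge0.
rewrite CL //; try by move=> u; apply: psi_ge0.
all: try by move=> u /=; apply: ler0n.
by rewrite muleA -EFinM mulrC.
Qed.

Lemma mean_ge0 y : 0 <= mean d y.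
Proof. by apply: esum_ge0 => n _; rewrite lee_fin mulr_ge0 ?ler0n. Qed.

Fixpoint fj (j : nat) (y : S) : \bar R :=
  match j with
  | 0%N => (if y \in B then 1 else 0)%:E
  | j'.+1 => if y \in B then 0 else
       mean d y * \esum_(x in [set: S]) ((p y x)%:E * fj j' x)
  end.

Lemma fj_ge0 j y : 0 <= fj j y.
Proof.
elim: j y => [|j IH] y /=; first by case: ifP.
case: ifP => // _; rewrite mule_ge0 ?mean_ge0 // esum_ge0 // => x _.
by rewrite mule_ge0 ?lee_fin.
Qed.

Lemma A_fj n y : An n y = \sum_(j < n.+1) fj j y.
Proof.
elim: n y => [|n IH] y.
  rewrite big_ord1 /=; case: ifPn => hy; first exact: A_in.
  exact: A0_out.
rewrite big_ord_recl /=; case: ifPn => hy.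
  rewrite A_in // big1 ?adde0 // => i _; by rewrite lift0 /= hy.
rewrite add0e A_succ //.
rewrite (eq_esum (b := fun x => \sum_(j < n.+1) ((p y x)%:E * fj j x))); last first.
  by move=> x _; rewrite IH ge0_sume_distrr // => *; exact: fj_ge0.
rewrite esum_sum; last by move=> *; rewrite mule_ge0 ?lee_fin ?fj_ge0.
rewrite ge0_sume_distrr; last by move=> *; rewrite esum_ge0 // => *; rewrite mule_ge0 ?lee_fin ?fj_ge0.
by apply: eq_bigr => i _; rewrite add0n.
Qed.

Lemma hB_fj y : hB p d B y = \esum_(j in [set: nat]) fj j y.
Proof.
transitivity (ereal_sup (range (fun n => An n y))); first by [].
rewrite (_ : (fun n => An n y) = (fun n => \sum_(j < n.+1) fj j y)).
  exact: (@sup_partial _ (fun j => fj j y) (fun j => fj_ge0 j y)).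
by apply/funext => n; exact: A_fj.
Qed.

Lemma hB_ge0 y : 0 <= hB p d B y.
Proof. by rewrite hB_fj esum_ge0 // => *; exact: fj_ge0. Qed.

Lemma h_in y : y \in B -> hB p d B y = 1.
Proof.
move=> hy; rewrite hB_fj (@esum_single _ _ _ _ 0%N) //=; first by rewrite hy.
by move=> [|j] //= _ _; rewrite hy.
by rewrite hy.
Qed.

Lemma h_harm z : z \notin B ->
  hB p d B z = mean d z * \esum_(x in [set: S]) ((p z x)%:E * hB p d B x).
Proof.
move=> hz; rewrite hB_fj esum_shift; first last.
- by rewrite /= (negbTE hz).
- by move=> j; exact: fj_ge0.
rewrite /= (negbTE hz) esumZl; first last.
- by move=> j _; rewrite esum_ge0 // => *; rewrite mule_ge0 ?lee_fin ?fj_ge0.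
- exact: mean_ge0.
congr (_ * _); rewrite esum_swap; last by move=> *; rewrite mule_ge0 ?lee_fin ?fj_ge0.
apply: eq_esum => x _; rewrite esumZl ?lee_fin ?hB_fj //.
by move=> *; exact: fj_ge0.
Qed.

Hypothesis hg : forall y z, green p d y z < +oo.
Hypothesis hnr : norming_region p d B.

Lemma Qpow_ge0 j y b : 0 <= Qpow p d j y b.
Proof.
elim: j y => [|j IH] y /=; first by case: eqP.
by apply: esum_ge0 => x _; rewrite mule_ge0 // /qm mule_ge0 ?mean_ge0 ?lee_fin.
Qed.

Lemma fj_le_Q j y : fj j y <= \esum_(b in B) Qpow p d j y b.
Proof.
elim: j y => [|j IH] y /=.
  case: ifPn => hy; last by apply: esum_ge0 => *; case: eqP.
  apply: le_trans (esum_ge1 (a := fun b => (if y == b then 1 else 0)%:E) (i := y) _ _) => /=.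
  - by rewrite eqxx.
  - by rewrite -in_setE.
  - by move=> *; case: eqP.
case: ifPn => hy; first by apply: esum_ge0 => b _; exact: (Qpow_ge0 j.+1 y b).
apply: (@le_trans _ _ (mean d y * \esum_(x in [set: S])
     ((p y x)%:E * \esum_(b in B) Qpow p d j x b))).
  apply: lee_wpmul2l; first exact: mean_ge0.
  by apply: le_esum => x _; apply: lee_wpmul2l; rewrite ?lee_fin ?IH.
rewrite (eq_esum (b := fun x => \esum_(b in B) ((p y x)%:E * Qpow p d j x b))); last first.
  by move=> x _; rewrite esumZl ?lee_fin // => *; exact: Qpow_ge0.
rewrite esum_swap; last by move=> *; rewrite mule_ge0 ?lee_fin ?Qpow_ge0.
rewrite -esumZl; first last.
- by move=> *; apply: esum_ge0 => *; rewrite mule_ge0 ?lee_fin ?Qpow_ge0.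
- exact: mean_ge0.
apply: le_esum => b _; rewrite -esumZl; first last.
- by move=> *; rewrite mule_ge0 ?lee_fin ?Qpow_ge0.
- exact: mean_ge0.
by apply: le_esum => x _; rewrite /qm muleA.
Qed.

Lemma h_fin y : hB p d B y < +oo.
Proof.
apply: (@le_lt_trans _ _ (\esum_(b in B) green p d y b)).
  rewrite hB_fj; apply: (@le_trans _ _ (\esum_(j in [set: nat]) \esum_(b in B) Qpow p d j y b)).
    by apply: le_esum => j _; exact: fj_le_Q.
  rewrite esum_swap; last by move=> *; exact: Qpow_ge0.
  by [].
case: hnr => finB _; rewrite esum_fset //; last first.
  by move=> b _; apply: esum_ge0 => *; exact: Qpow_ge0.
rewrite fsbig_finite //; apply: lte_sum_pinfty => b _; exact: hg.
Qed.

Lemma h_pos_Q j y b : B b -> 0 < Qpow p d j y b -> 0 < hB p d B y.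
Proof.
move=> Bb; elim: j y => [|j IH] y.
  case: (boolP (y \in B)) => hy; first by rewrite h_in.
  move=> /=; case: eqP => [e|]; last by rewrite ltxx.
  by exfalso; move/negP: hy; apply; rewrite e in_setE.
case: (boolP (y \in B)) => hy; first by rewrite h_in.
move=> /= hQ.
have [x _] : exists2 x, [set: S] x & 0 < qm p d y x * Qpow p d j x b.
  by apply: esum_pos hQ => x _; rewrite mule_ge0 ?Qpow_ge0 // /qm mule_ge0 ?mean_ge0 ?lee_fin.
rewrite mule_ge0_gt0 ?Qpow_ge0 ?/qm ?mule_ge0 ?mean_ge0 ?lee_fin // => /andP [].
rewrite mule_ge0_gt0 ?mean_ge0 ?lee_fin // => /andP [mpos ppos] /IH hx.
rewrite h_harm //; apply: mule_gt0 => //.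
apply: lt_le_trans (esum_ge1 (a := fun x => (p y x)%:E * hB p d B x) (i := x) _ _) => //=.
- exact: mule_gt0.
- by move=> *; rewrite mule_ge0 ?lee_fin ?hB_ge0.
Qed.

Lemma h_pos y : 0 < hB p d B y.
Proof.
case: hnr => _ /(_ y) hg0.
have [b Bb hb] := esum_pos (fun b _ => esum_ge0 (fun j _ => Qpow_ge0 j y b)) hg0.
have [j _ hj] := esum_pos (fun j _ => Qpow_ge0 j y b) hb.
exact: h_pos_Q hj.
Qed.

Lemma hBE y : hB p d B y = (hr p d B y)%:E.
Proof. by rewrite /hr fineK // ge0_fin_numE ?hB_ge0 ?h_fin. Qed.

Lemma hr_gt0 y : (0 < hr p d B y)%R.
Proof. by rewrite /hr fine_gt0 // h_pos h_fin. Qed.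

Lemma mean_fin z : z \notin B -> mean d z = (mr d z)%:E /\ (0 < mr d z)%R.
Proof.
move=> hz; have := h_harm hz.
set X := \esum_(x in [set: S]) _.
have X0 : 0 <= X by apply: esum_ge0 => *; rewrite mule_ge0 ?lee_fin ?hB_ge0.
have := h_pos z; have := h_fin z.
have := mean_ge0 z; rewrite /mr; case: (mean d z) => [r||] //=.
  rewrite lee_fin => r0 hf hp e; split => //.
  rewrite lt0r r0 andbT; apply/eqP => r00; move: hp; by rewrite e r00 mul0e ltxx.
move=> _ hf hp e; exfalso; move: hf hp; rewrite e.
have [->|Xp] := eqVneq X 0; first by rewrite mule0 ltxx.
by rewrite gt0_mulye ?ltxx // lt0e Xp X0.
Qed.

Lemma hr_ge0 y : (0 <= hr p d B y)%R.
Proof. exact/ltW/hr_gt0. Qed.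

Lemma harmR z : z \notin B ->
  \esum_(x in [set: S]) ((p z x * hr p d B x)%R)%:E = (hr p d B z / mr d z)%:E.
Proof.
move=> hz; have [me mp] := mean_fin hz.
have e := h_harm hz; rewrite me in e.
have hf := h_fin z; rewrite e in hf.
rewrite (eq_esum (b := fun x => (p z x)%:E * hB p d B x)); last first.
  by move=> x _; rewrite hBE EFinM.
move: e hf; rewrite hBE.
have : 0 <= \esum_(x in [set: S]) ((p z x)%:E * hB p d B x).
  by apply: esum_ge0 => *; rewrite mule_ge0 ?lee_fin ?hB_ge0.
case: (\esum_(x in [set: S]) ((p z x)%:E * hB p d B x)) => [x||] //=.
  move=> _ e2 _; have e3 : hr p d B z = (mr d z * x)%R by apply: EFin_inj; rewrite e2.
  by congr (_%:E); rewrite e3 mulrAC mulfV ?mul1r // gt_eqF.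
by move=> _ _; rewrite muleC gt0_mulye ?lte_fin // ltxx.
Qed.

Lemma kill0 z : z \notin B -> kill p d B z = 0%R.
Proof.
move=> hz; have [me mp] := mean_fin hz; rewrite /kill.
rewrite (eq_esum (b := fun y => (mr d z / hr p d B z)%:E * ((p z y * hr p d B y)%R)%:E)); last first.
  move=> y _; rewrite /ph (negbTE hz) -EFinM; congr (_%:E).
  by rewrite mulrAC -!mulrA; congr (_ * _)%R; rewrite mulrCA mulrC.
rewrite esumZl_fin; first last.
- by move=> *; rewrite lee_fin mulr_ge0 ?hr_ge0.
- by apply: divr_ge0; [exact: ltW | exact: hr_ge0].
rewrite harmR // -EFinM /= mulrA divrK ?unitfE ?gt_eqF ?hr_gt0 //.
by rewrite mulfV ?gt_eqF // subrr.
Qed.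

Lemma e3 (a b : R) (c : \bar R) : a%:E * c * b%:E = c * (a * b)%:E.
Proof. by rewrite EFinM muleAC muleC. Qed.
Lemma e4 (m q r : R) (c : \bar R) : m%:E * (q%:E * (c * r%:E)) = c * (m * q * r)%:E.
Proof. by rewrite muleA (muleC c) muleA -!EFinM muleC. Qed.

Lemma ph_ge0 x y : (0 <= ph p d B x y)%R.
Proof.
rewrite /ph; case: ifP => // _.
by rewrite divr_ge0 ?mulr_ge0 ?hr_ge0 ?fine_ge0 ?mean_ge0.
Qed.

Lemma hit_ge0 j x : 0 <= hitB p d B j x.
Proof.
elim: j x => [|j IH] x /=; first by case: ifP.
by case: ifP => // _; apply: esum_ge0 => *; rewrite mule_ge0 ?lee_fin ?ph_ge0.
Qed.

Lemma hit_fj j x : hitB p d B j x * (hr p d B x)%:E = fj j x.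
Proof.
elim: j x => [|j IH] x /=.
  case: ifPn => hx; last by rewrite mul0e.
  by rewrite mul1e -hBE h_in.
case: ifPn => hx; first by rewrite mul0e.
rewrite -esumZr; first last.
- by move=> *; rewrite mule_ge0 ?lee_fin ?ph_ge0 ?hit_ge0.
- by rewrite lee_fin hr_ge0.
have [me mp] := mean_fin hx; rewrite me -esumZl; first last.
- by move=> *; rewrite mule_ge0 ?lee_fin ?fj_ge0.
- by rewrite lee_fin ltW.
apply: eq_esum => y _; rewrite -IH /ph (negbTE hx).
rewrite e3 e4; congr (_ * _%:E).
by rewrite divfK // gt_eqF // hr_gt0.
Qed.

Lemma enter1 x : enterB p d B x = 1.
Proof.
have e : enterB p d B x * (hr p d B x)%:E = (hr p d B x)%:E.
  rewrite /enterB -esumZr; first last.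
  - by move=> *; exact: hit_ge0.
  - by rewrite lee_fin hr_ge0.
  under eq_esum do rewrite hit_fj.
  by rewrite -hB_fj hBE.
have e0 : 0 <= enterB p d B x by apply: esum_ge0 => *; exact: hit_ge0.
move: e e0; case: (enterB p d B x) => [r||] //.
  move=> e2 _; have e3 : (r * hr p d B x = 1 * hr p d B x)%R.
    by apply: EFin_inj; rewrite EFinM e2 mul1r.
  by congr (_%:E); apply: (mulIf _ e3); rewrite gt_eqF ?hr_gt0.
by rewrite gt0_mulye ?lte_fin ?hr_gt0.
Qed.

Local Close Scope ereal_scope.

Lemma perm_rot' (T : eqType) n (s : seq T) : perm_eq (rot n s) s.
Proof. by rewrite perm_rot. Qed.

Lemma white_count (ws : seq (S * bool)) : white ws = (count (fun c => c.2) ws == 0%N).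
Proof. by rewrite /white; elim: ws => //= [[y b] ws ->]; case: b. Qed.

Lemma deco_rot z (hz : z \notin B) (cs : seq (S * bool)) i : (i < size cs)%N ->
  decoLoc p d B (z, true) (rot i cs) =
  if (nth (z, false) cs i).2 && (count (fun c => c.2) cs == 1%N) then
    (size cs)%:R * d z (size cs) * (\prod_(c <- cs) p z c.1) *
      hr p d B (nth (z, false) cs i).1 / hr p d B z
  else 0.
Proof.
move=> hi; set ws := drop i.+1 cs ++ take i cs.
have e : rot i cs = nth (z, false) cs i :: ws by rewrite /rot (drop_nth (z, false) hi).
have cnt : count (fun c => c.2) cs = ((nth (z, false) cs i).2 + count (fun c => c.2) ws)%N.
  by rewrite -(permP (perm_rot' i cs)) e.
have pr : \prod_(c <- cs) p z c.1 = p z (nth (z, false) cs i).1 * \prod_(c <- ws) p z c.1.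
  by rewrite -(perm_big _ (perm_rot' i cs)) e big_cons.
have sz : size cs = (size ws).+1 by rewrite -(size_rot i cs) e.
have [me mp] := mean_fin hz.
rewrite e; move: cnt pr; case: (nth (z, false) cs i) => y [] /= cnt pr.
  rewrite /decoLoc /= (negbTE hz) white_count cnt add1n eqSS.
  case: ifP => // _; rewrite /dsb /ph (negbTE hz) pr sz.
  have h1 : hr p d B z != 0 by rewrite gt_eqF // hr_gt0.
  have h2 : mr d z != 0 by rewrite gt_eqF.
  by field; rewrite ?h1 ?h2.
rewrite /decoLoc /= (negbTE hz); case: ifP => _; by rewrite ?kill0 ?mulr0.
Qed.

Lemma bb_blue z (hz : z \notin B) (cs : seq (S * bool)) : (0 < size cs)%N ->
  bbLoc p d B (z, true) cs =
  if count (fun c => c.2) cs == 1%N then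
    d z (size cs) * (\prod_(c <- cs) p z c.1) *
      (\sum_(c <- cs | c.2) hr p d B c.1) / hr p d B z
  else 0.
Proof.
move=> hs; rewrite /bbLoc /= (negbTE hz); case: ifP => // _.
have sh : 0 < \sum_(c <- cs) hr p d B c.1.
  case: cs hs => // c cs _; rewrite big_cons.
  by apply: ltr_pwDl; [exact: hr_gt0 | apply: sumr_ge0 => *; exact: hr_ge0].
have h1 : hr p d B z != 0 by rewrite gt_eqF // hr_gt0.
have h2 : \sum_(c <- cs) hr p d B c.1 != 0 by rewrite gt_eqF.
by field; rewrite ?h1 ?h2.
Qed.

Lemma rot_sum (a : S * bool) (cs : seq (S * bool)) : (0 < size cs)%N ->
  \sum_(i < size cs) decoLoc p d B a (rot i cs) = (size cs)%:R * bbLoc p d B a cs.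
Proof.
move=> hs; case: a => z blue.
case: (boolP (~~ blue || (z \in B))) => hw.
  rewrite /bbLoc hw; under eq_bigr => i _ do rewrite /decoLoc hw /bmcw.
  rewrite /bmcw.
  have -> : white cs = white (rot 0 cs) by rewrite rot0.
  under eq_bigr => i _ do rewrite /white (perm_all _ (perm_rot' i cs)) size_rot
     (perm_big _ (perm_rot' i cs)).
  by rewrite rot0 sumr_const card_ord mulr_natl.
move: hw; rewrite negb_or negbK => /andP [-> hz].
rewrite (eq_bigr (fun i : 'I_(size cs) => if (nth (z, false) cs i).2 &&
    (count (fun c => c.2) cs == 1%N) then
    (size cs)%:R * d z (size cs) * (\prod_(c <- cs) p z c.1) *
      hr p d B (nth (z, false) cs i).1 / hr p d B z else 0)); last first.
  by move=> i _; rewrite deco_rot.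
rewrite bb_blue //; case: ifP => hc; last first.
  by rewrite mulr0 big1 // => i _; rewrite andbF.
under eq_bigr do rewrite andbT.
rewrite -big_mkcond /=.
set K := ((size cs)%:R * d z (size cs) * \prod_(c <- cs) p z c.1)%R.
rewrite (eq_bigr (fun i : 'I_(size cs) => K * (hr p d B (nth (z, false) cs i).1 * (hr p d B z)^-1)));
  last by move=> i _; rewrite mulrA.
rewrite -mulr_sumr -mulr_suml [\sum_(c <- cs | c.2) _](big_nth (z, false)) big_mkord.
have h1 : hr p d B z != 0 by rewrite gt_eqF // hr_gt0.
by rewrite /K !mulrA.
Qed.

Lemma deco_nil a : decoLoc p d B a [::] = bbLoc p d B a [::].
Proof.
case: a => z blue; rewrite /decoLoc /bbLoc; case: ifP => // /negbT.
rewrite negb_or negbK => /andP [_ hz] /=.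
by rewrite kill0 // mulr0.
Qed.

Lemma Perm_perm_eq (T : eqType) (s t : seq T) : Permutation s t -> perm_eq s t.
Proof.
elim => [|x l l' _ IH|x y l|l l' l'' _ h1 _ h2] //.
- by rewrite perm_cons.
- by apply/permP => f /=; rewrite addnCA.
- exact: perm_trans h1 h2.
Qed.

Lemma Perm_map (T : Type) (U : eqType) (f : T -> U) (s t : seq T) :
  Permutation s t -> perm_eq (map f s) (map f t).
Proof.
elim => [|x l l' _ IH|x y l|l l' l'' _ h1 _ h2] //=.
- by rewrite perm_cons.
- by apply/permP => g /=; rewrite addnCA.
- exact: perm_trans h1 h2.
Qed.

Lemma PI_marks (ts Us : seq tree) : PI ts Us -> perm_eq (map (@mark S) ts) (map (@mark S) Us).
Proof.
move=> [us' [pm f]]; have -> : map (@mark S) ts = map (@mark S) us'.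
  by elim: f => //= t u ts' us'' h _ ->; rewrite (tiso_mark h).
exact: Perm_map.
Qed.

Lemma bb_perm a (cs cs' : seq (S * bool)) : perm_eq cs cs' -> bbLoc p d B a cs = bbLoc p d B a cs'.
Proof.
move=> h; case: a => z b; rewrite /bbLoc /bmcw /white (perm_all _ h) (perm_size h).
by rewrite !(perm_big _ h) (permP h).
Qed.

Lemma dsb_ge0 z n : (0 <= dsb d z n)%R.
Proof. by rewrite /dsb divr_ge0 ?mulr_ge0 ?ler0n // /mr fine_ge0 // mean_ge0. Qed.

Lemma decoLoc_ge0 a cs : (0 <= decoLoc p d B a cs)%R.
Proof.
case: a => z b; rewrite /decoLoc; case: ifP => [_|]; first exact: bmcw_ge0.
move/negbT; rewrite negb_or negbK => /andP [_ hz].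
case: cs => [|[y [|]] ws]; rewrite ?kill0 ?mulr0 //.
  case: ifP => // _; rewrite mulr_ge0 ?ph_ge0 // mulr_ge0 ?dsb_ge0 //.
  by apply: prodr_ge0 => *.
by case: ifP => // _; rewrite kill0 ?mulr0.
Qed.

Lemma bbLoc_ge0 a cs : (0 <= bbLoc p d B a cs)%R.
Proof.
case: a => z b; rewrite /bbLoc; case: ifP => [_|_]; first exact: bmcw_ge0.
case: ifP => // _.
have sh : (0 <= \sum_(c <- cs) hr p d B c.1)%R by apply: sumr_ge0 => *; exact: hr_ge0.
rewrite !mulr_ge0 ?invr_ge0 ?hr_ge0 ?divr_ge0 //; first by apply: prodr_ge0 => *.
by apply: sumr_ge0 => *; exact: hr_ge0.
Qed.

Lemma Perm_rot (T : Type) i (s : seq T) : Permutation (rot i s) s.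
Proof. by rewrite /rot -{3}(cat_take_drop i s); exact: Permutation_app_comm. Qed.

Local Open Scope ereal_scope.

Lemma sum_const_e (X : \bar R) k : 0 <= X -> \sum_(i < k) X = (k%:R)%:E * X.
Proof.
move=> X0; elim: k => [|k IH]; first by rewrite big_ord0 mul0e.
by rewrite big_ord_recr /= IH -addn1 natrD EFinD ge0_muleDl ?lee_fin // mul1e.
Qed.

Lemma cancel_e (c : R) (X Y : \bar R) : (0 < c)%R -> c%:E * X = c%:E * Y -> X = Y.
Proof.
move=> c0 e; have := congr1 (fun z => (c^-1)%:E * z) e.
by rewrite /= !muleA -!EFinM mulVf ?gt_eqF // !mul1e.
Qed.

Lemma stepA (Dn : tree -> R) : (forall t, (0 <= Dn t)%R) -> forall a (Us : seq tree),
  \esum_(ts in [set ts | PI ts Us]) (decoLoc p d B a (map (@mark S) ts) * \prod_(u <- ts) Dn u)%:E =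
  \esum_(ts in [set ts | PI ts Us]) (bbLoc p d B a (map (@mark S) ts) * \prod_(u <- ts) Dn u)%:E.
Proof.
move=> Dn0 a Us; set L := [set ts | PI ts Us].
have pD : forall ts : seq tree, (0 <= \prod_(u <- ts) Dn u)%R by move=> ts; apply: prodr_ge0 => *.
case: (posnP (size Us)) => hs.
  move/size0nil: hs => hU; rewrite /L hU.
  rewrite (_ : [set ts | PI ts [::]] = [set [::]]); last first.
    by apply/seteqP; split => ts /=; move/PI_nil.
  by rewrite !esum_set1 ?lee_fin ?mulr_ge0 ?decoLoc_ge0 ?bbLoc_ge0 //= deco_nil.
set k := size Us.
have rotb : forall i (G : seq tree -> \bar R), \esum_(ts in L) G ts = \esum_(ts in L) G (rot i ts).
  move=> i G; apply: reindex_esum; split.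
  - by move=> ts h; apply: PI_trans h; apply: PI_perm; exact: Perm_rot.
  - by move=> ts us _ _; apply: rot_inj.
  - move=> ts h; exists (rotr i ts); last by rewrite rotrK.
    by apply: PI_trans h; apply: PI_perm; rewrite /rotr; exact: Perm_rot.
have sizeL : forall ts, L ts -> size (map (@mark S) ts) = k.
  by move=> ts h; rewrite size_map (PI_size h).
have sumk : forall (F : seq tree -> R), (forall ts, (0 <= F ts)%R) ->
   ((k%:R)%:E * (\esum_(ts in L) (F ts)%:E) = \esum_(ts in L) \sum_(i < k) (F (rot i ts))%:E)%E.
  move=> F F0; rewrite -sum_const_e; last by apply: esum_ge0 => *; rewrite lee_fin.
  rewrite esum_sum; last by move=> *; rewrite lee_fin.
  by apply: eq_bigr => i _; exact: rotb.
apply: (@cancel_e k%:R); first by rewrite ltr0n.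
rewrite sumk; last by move=> ts; rewrite mulr_ge0 ?decoLoc_ge0.
rewrite -esumZl_fin; first last.
- by move=> *; rewrite lee_fin mulr_ge0 ?bbLoc_ge0.
- exact: ler0n.
apply: eq_esum => ts hts; rewrite sumEFin -EFinM; congr (_%:E).
rewrite (eq_bigr (fun i : 'I_k => decoLoc p d B a (rot i (map (@mark S) ts)) * \prod_(u <- ts) Dn u)%R); last first.
  by move=> i _; rewrite map_rot (perm_big _ (perm_rot' i ts)).
rewrite -mulr_suml mulrA; congr (_ * _)%R.
have rs : forall (cs : seq (S * bool)) m, size cs = m -> (0 < m)%N ->
    (\sum_(i < m) decoLoc p d B a (rot i cs) = m%:R * bbLoc p d B a cs)%R.
  by move=> cs m <-; exact: rot_sum.
exact: rs (sizeL _ hts) hs.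
Qed.

Lemma stepB (Dn Dn' : tree -> R) : (forall t, (0 <= Dn t)%R) -> (forall t, (0 <= Dn' t)%R) ->
  (forall U, \esum_(u in [set u | tiso u U]) (Dn u)%:E =
             \esum_(u in [set u | tiso u U]) (Dn' u)%:E) -> forall a (Us : seq tree),
  \esum_(ts in [set ts | PI ts Us]) (bbLoc p d B a (map (@mark S) ts) * \prod_(u <- ts) Dn u)%:E =
  \esum_(ts in [set ts | PI ts Us]) (bbLoc p d B a (map (@mark S) ts) * \prod_(u <- ts) Dn' u)%:E.
Proof.
move=> D0 D'0 hcl a Us.
rewrite (eq_esum (b := fun ts => (bbLoc p d B a (map (@mark S) Us))%:E * (\prod_(u <- ts) Dn u)%:E)); last first.
  by move=> ts h; rewrite (bb_perm _ (PI_marks h)) EFinM.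
rewrite [RHS](eq_esum (b := fun ts => (bbLoc p d B a (map (@mark S) Us))%:E * (\prod_(u <- ts) Dn' u)%:E)); last first.
  by move=> ts h; rewrite (bb_perm _ (PI_marks h)) EFinM.
rewrite !esumZl_fin ?bbLoc_ge0 //; first last.
- by move=> ts _; rewrite lee_fin; apply: prodr_ge0 => *.
- by move=> ts _; rewrite lee_fin; apply: prodr_ge0 => *.
by rewrite (LC D0 D'0 hcl).
Qed.

Lemma class_eq n (T : tree) :
  \esum_(t in [set t | tiso t T]) (tw (decoLoc p d B) n t)%:E =
  \esum_(t in [set t | tiso t T]) (tw (bbLoc p d B) n t)%:E.
Proof.
elim: n T => [|n IH] [a Us].
  by apply: eq_esum => -[b ts] _.
have hbij : set_bij [set ts | PI ts Us] [set t | tiso t (Node a Us)] (Node a).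
  split.
  - by move=> ts h; apply/tisoE.
  - by move=> ts us _ _ [].
  - by move=> [b ts] /tisoE [-> h]; exists ts.
rewrite !(reindex_esum _ _ _ _ hbij) /=.
rewrite stepA; last by move=> t; apply: tw_ge0 => *; exact: decoLoc_ge0.
apply: stepB => //.
- by move=> t; apply: tw_ge0 => *; exact: decoLoc_ge0.
- by move=> t; apply: tw_ge0 => *; exact: bbLoc_ge0.
Qed.

Lemma tlaw_eq x n (T : tree) : tlaw (decoLoc p d B) x n T = tlaw (bbLoc p d B) x n T.
Proof.
rewrite /tlaw; case: (pselect (mark T = (x, true))) => hm.
  rewrite (_ : [set t | mark t = (x, true) /\ tiso t T] = [set t | tiso t T]).
    exact: class_eq.
  apply/seteqP; split => t /=; first by case.
  by move=> h; split => //; rewrite (tiso_mark h).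
rewrite (_ : [set t | mark t = (x, true) /\ tiso t T] = set0) ?esum_set0 //.
apply/seteqP; split => t //= [h1 h2]; apply: hm; by rewrite -(tiso_mark h2).
Qed.

End H1.

Unset Implicit Arguments.

Theorem mainTheorem3 (R : realType) (S : countType)
  (p : S -> S -> R) (d : S -> nat -> R) (B : set S) (x : S) :
  (forall y z, 0 <= p y z) ->
  (forall y, (\esum_(z in [set: S]) (p y z)%:E = 1)%E) ->
  (forall y n, 0 <= d y n) ->
  (forall y, (\esum_(n in [set: nat]) (d y n)%:E = 1)%E) ->
  (forall y z, (green p d y z < +oo)%E) ->
  norming_region p d B ->
  (forall (n : nat) (T : mtree S),
      tlaw (decoLoc p d B) x n T = tlaw (bbLoc p d B) x n T)
  /\ enterB p d B x = 1%E.
Proof.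
move=> p0 psum d0 dsum hg hnr; split.
  by move=> n T; apply: tlaw_eq.
by apply: enter1.
Qed.
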